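(* Let $G$ be a simple graph with $v$ vertices and $|E|$ edges, let $p_0$ be the number of connected components of $G$, $p_0^{bi}$ the number of bipartite connected components of $G$, and $p_1=|E|-v+p_0$ the cyclomatic number of $G$. Then (0) $H^{0,v-1}_{\mathcal A_2}(G)\cong\mathbb Z^{p_0^{bi}}$; (1) $H^{1,v-1}_{\mathcal A_2}(G)\cong\mathbb Z^{p_1-(p_0-p_0^{bi})}\oplus\mathbb Z_2^{p_0-p_0^{bi}}$.
   Context: For $m\ge 2$ let $\mathcal A_m=\mathbb Z[x]/(x^m)$. For a finite graph $G$ with vertex set $V(G)$, edge set $E(G)$ (with a fixed total order), and $s\subseteq E(G)$, let $[G:s]$ be the spanning subgraph with edge set $s$. An enhanced state is a pair $(s,c)$ where $s\subseteq E(G)$ and $c$ assigns to each component $C$ of $[G:s]$ an exponent $c(C)\in\{0,\dots,m-1\}$ (weight $x^{c(C)}$); its bidegree is $(|s|,\sum_C c(C))$. $C^{i,j}_{\mathcal A_m}(G)$ is the free abelian group on enhanced states of bidegree $(i,j)$. The differential is $d=\sum_{e\notin s}(-1)^{|\{f\in s:f<e\}|}d_e$, where $d_e(s,c)$ is the enhanced state on $s\cup\{e\}$ obtained, if $e$ joins distinct components $C_1,C_2$, by giving the merged component the weight $x^{c(C_1)}x^{c(C_2)}\in\mathcal A_m$ (zero if the exponent sum is $\ge m$) and keeping other weights, and, if $e$ has both endpoints in one component, by keeping all weights (identity). $H^{i,j}_{\mathcal A_m}(G)$ is the resulting cohomology. *)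

(* Defs.v *)
(* Chromatic cohomology over A_M = Z[x]/(x^M). *)
From HB Require Import structures.
From mathcomp Require Import all_boot all_order all_algebra.
Set Implicit Arguments.
Unset Strict Implicit.
Unset Printing Implicit Defensive.
Import GRing.Theory.
Local Open Scope ring_scope.

Section Chromatic.
(* A graph with vertex type T and m edges indexed by 'I_m (the edge order is
   the order of 'I_m); edge k has endpoints src k and tgt k. *)
Variables (T : finType) (m : nat) (src tgt : 'I_m -> T).

Definition adj (s : {set 'I_m}) : rel T := fun x y =>
  [exists k in s, ((src k == x) && (tgt k == y)) || ((src k == y) && (tgt k == x))].

Definition components (s : {set 'I_m}) : {set {set T}} :=
  equivalence_partition (connect (adj s)) [set: T].

Variable M : nat.

(* raw pair (s, c), c : components -> exponents in {0..M-1} *)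
Definition pstate := ({set 'I_m} * {ffun {set T} -> 'I_M})%type.
(* c is only meaningful on components of [G:s]; it is normalized to 0 elsewhere *)
Definition is_state (p : pstate) : bool :=
  [forall X : {set T}, (X \notin components p.1) ==> (val (p.2 X) == 0%N)].
Definition state := {p : pstate | is_state p}.

Definition deg_i (t : state) : nat := #|(val t).1|.
Definition deg_j (t : state) : nat :=
  (\sum_(C in components (val t).1) val ((val t).2 C))%N.

Notation chain := {ffun state -> int}.

(* the enhanced state d_e(s,c), or None when it is zero *)
Definition de_target (p : pstate) (e : 'I_m) : option pstate :=
  let s := p.1 in let c := p.2 in
  let C1 := pblock (components s) (src e) in
  let C2 := pblock (components s) (tgt e) in
  let s' := e |: s in
  if C1 == C2 then Some (s', c)
  else match insub (val (c C1) + val (c C2))%N : option 'I_M with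
       | Some o =>
           let z : 'I_M := Ordinal (leq_ltn_trans (leq0n o) (ltn_ord o)) in
           Some (s', [ffun X => if X == C1 :|: C2 then o
                               else if X \in components s' then c X else z])
       | None => None
       end.

Definition d_e (t : state) (e : 'I_m) : chain :=
  match de_target (val t) e with
  | Some p => [ffun u : state => ((val u == p) : nat)%:Z]
  | None => 0
  end.

Definition dbasis (t : state) : chain :=
  \sum_(e in ~: (val t).1)
     d_e t e *~ ((-1) ^+ #|[set f in (val t).1 | (f < e)%N]| : int).

Definition diff (f : chain) : chain := \sum_(t : state) dbasis t *~ f t.

Definition in_bideg (i : nat) (j : int) (f : chain) : Prop :=
  forall t, f t != 0 -> deg_i t = i /\ (deg_j t)%:Z = j.
Definition cocycle (i : nat) (j : int) (f : chain) : Prop :=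
  in_bideg i j f /\ diff f = 0.
(* image of d : C^{i-1,j} -> C^{i,j} (zero when i = 0) *)
Definition coboundary (i : nat) (j : int) (f : chain) : Prop :=
  exists g : chain,
    (forall t, g t != 0 -> (deg_i t).+1 = i /\ (deg_j t)%:Z = j) /\ f = diff g.

(* H^{i,j}_{A_M}(G) = cocycles / coboundaries is isomorphic to A:
   there is a surjective group homomorphism from the cocycles onto A
   whose kernel is exactly the coboundaries. *)
Definition cohom_iso (i : nat) (j : int) (A : zmodType) : Prop :=
  exists phi : chain -> A,
    [/\ (forall f g, cocycle i j f -> cocycle i j g -> phi (f + g) = phi f + phi g),
        (forall a, exists f, cocycle i j f /\ phi f = a) &
        (forall f, cocycle i j f -> (phi f = 0 <-> coboundary i j f))].

End Chromatic.

Section Invariants.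
Variables (T : finType) (m : nat) (src tgt : 'I_m -> T).

Definition graph_components : {set {set T}} := components src tgt [set: 'I_m].
Definition p0 : nat := #|graph_components|.
Definition bipartite (C : {set T}) : bool :=
  [exists f : {ffun T -> bool},
     [forall k : 'I_m, (src k \in C) ==> (f (src k) != f (tgt k))]].
Definition p0bi : nat := #|[set C in graph_components | bipartite C]|.
(* cyclomatic number |E| - v + p0 (nonnegative) *)
Definition p1 : nat := (m + p0 - #|T|)%N.
End Invariants.

(* Main.v *)
Require Import Defs.
From mathcomp Require Import all_boot all_order all_algebra.
From mathcomp Require Import zify ring.
Import GRing.Theory.
Local Open Scope ring_scope.
Set Implicit Arguments. Unset Strict Implicit. Unset Printing Implicit Defensive.

Lemma conn_inv (T : finType) (e : rel T) (U : eqType) (g : T -> U) :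
  (forall u v, e u v -> g u = g v) -> forall x y, connect e x y -> g x = g y.
Proof.
move=> H x y /connectP[p pp ->]; elim: p x pp => //= z p IH x /andP[exz pp].
by rewrite (H _ _ exz) IH.
Qed.

Lemma two_Z2 : (2%:~R : 'Z_2) = 0. Proof. by apply/eqP. Qed.
Lemma even_Z2 (z : int) : (z%:~R : 'Z_2) = 0 -> z = 2 * (z %/ 2)%Z.
Proof.
move=> H; have e := divz_eq z 2.
have r0 : 0 <= (z %% 2)%Z by apply: modz_ge0.
have r1 : (z %% 2)%Z < 2 by apply: ltz_pmod.
have : (z %% 2)%Z = 0 \/ (z %% 2)%Z = 1 by lia.
case=> r; last first.
  by move: H; rewrite e r intrD intrM two_Z2 mulr0 add0r => /eqP.
by rewrite {1}e r addr0 mulrC.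
Qed.
Lemma Z2_even (z : int) : ((2 * z)%:~R : 'Z_2) = 0.
Proof. by rewrite intrM two_Z2 mul0r. Qed.
Lemma natZ2 (x : 'Z_2) : ((x : nat)%:Z)%:~R = x :> 'Z_2.
Proof. by rewrite -pmulrn natr_Zp. Qed.

Lemma enum_cast (U : finType) (S : {set U}) n (H : #|S| = n) :
  [/\ forall i, enum_val (cast_ord (esym H) i) \in S,
      injective (fun i => enum_val (cast_ord (esym H) i)) &
      forall x, x \in S -> exists i, enum_val (cast_ord (esym H) i) = x].
Proof.
split.
- by move=> i; exact: enum_valP.
- by move=> i j /enum_val_inj /cast_ord_inj.
move=> x xS; exists (cast_ord H (enum_rank_in xS x)).
by rewrite cast_ordK enum_rankK_in.
Qed.

Lemma sum_ind (U : eqType) n (e : 'I_n -> U) (v : 'I_n -> int) :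
  injective e -> forall i0, \sum_(i < n) (e i0 == e i)%:R * v i = v i0.
Proof.
move=> inj i0; rewrite (bigD1 i0) //= eqxx mul1r big1 ?addr0 // => i ne.
by rewrite (inj_eq inj) eq_sym (negbTE ne) mul0r.
Qed.

Lemma sum_ind0 (U : eqType) n (e : 'I_n -> U) (v : 'I_n -> int) x :
  (forall i, e i != x) -> \sum_(i < n) (x == e i)%:R * v i = 0.
Proof.
by move=> H; rewrite big1 // => i _; rewrite eq_sym (negbTE (H i)) mul0r.
Qed.

Section Graph.
Variables (T : finType) (m : nat) (src tgt : 'I_m -> T).
Hypothesis Hloop : forall k, src k != tgt k.

Local Notation GE := (adj src tgt [set: 'I_m]).

Lemma EP x y : reflect (exists k, ((src k == x) && (tgt k == y)) || ((src k == y) && (tgt k == x))) (GE x y).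
Proof.
apply: (iffP existsP) => [[k /andP[_ H]]|[k H]]; exists k => //.
by rewrite in_setT H.
Qed.

Lemma E_sym : forall x y, GE x y = GE y x.
Proof.
move=> x y; apply/EP/EP => [][k H]; exists k; by rewrite orbC.
Qed.

Lemma Ek k : GE (src k) (tgt k).
Proof. by apply/EP; exists k; rewrite !eqxx. Qed.

Lemma csym : connect_sym GE.
Proof. exact: sym_connect_sym E_sym. Qed.

Definition rt x := fingraph.root GE x.

Lemma rt_eq x y : connect GE x y -> rt x = rt y.
Proof. by move/(fingraph.rootP csym). Qed.

Lemma conn_rt x y : connect GE x y = (rt x == rt y).
Proof. by rewrite /rt fingraph.root_connect //; exact: csym. Qed.

Lemma rt_rt x : rt (rt x) = rt x.
Proof. by rewrite /rt fingraph.root_root //; exact: csym. Qed.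

Lemma rt_k k : rt (tgt k) = rt (src k).
Proof. by apply/esym/rt_eq/connect1/Ek. Qed.

Fixpoint reach n x y : bool :=
  if n is n'.+1 then [exists z, reach n' x z && GE z y] else x == y.

Lemma reach_cons n x z y : GE x z -> reach n z y -> reach n.+1 x y.
Proof.
elim: n x z y => [|n IH] x z y /= exz.
  by move/eqP=> <-; apply/existsP; exists x; rewrite eqxx.
case/existsP=> w /andP[r ewy]; apply/existsP; exists w; rewrite ewy andbT.
exact: IH exz r.
Qed.

Lemma conn_reach x y : connect GE x y -> exists n, reach n x y.
Proof.
move=> /connectP[p pp ->]; elim: p x pp => [|z p IH] x /=; first by exists 0%N; rewrite /= eqxx.
case/andP=> exz /IH[n r]; exists n.+1; exact: reach_cons exz r.
Qed.

Lemma reach_conn n x y : reach n x y -> connect GE x y.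
Proof.
elim: n y => [|n IH] y /=; first by move/eqP=> ->.
case/existsP=> z /andP[/IH c ezy]; apply: connect_trans c (connect1 ezy).
Qed.

Lemma exdep x : exists n, reach n (rt x) x.
Proof. by apply: conn_reach; rewrite csym /rt fingraph.connect_root. Qed.

Definition dep x := ex_minn (exdep x).

Lemma dep_reach x : reach (dep x) (rt x) x.
Proof. by rewrite /dep; case: ex_minnP. Qed.

Lemma dep_min x n : reach n (rt x) x -> (dep x <= n)%N.
Proof. by rewrite /dep; case: ex_minnP => d _ H /H. Qed.

Lemma dep0 x : (dep x == 0%N) = (rt x == x).
Proof.
apply/eqP/eqP => [H|H].
  by have := dep_reach x; rewrite H => /eqP.
by apply/eqP; rewrite -leqn0; apply: dep_min; rewrite /= H.
Qed.

Lemma depS x n : dep x = n.+1 -> exists2 y, GE y x & dep y = n.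
Proof.
move=> H; have := dep_reach x; rewrite H /= => /existsP[y /andP[r eyx]].
exists y => //.
have ry : rt y = rt x by apply: rt_eq; exact: connect1.
apply/eqP; rewrite eqn_leq; apply/andP; split.
  by apply: dep_min; rewrite ry.
have : (dep x <= (dep y).+1)%N.
  apply: dep_min => /=; apply/existsP; exists y; rewrite eyx andbT -ry.
  exact: dep_reach.
by rewrite H.
Qed.

Definition oth k x := if src k == x then tgt k else src k.
Definition isend k x := (src k == x) || (tgt k == x).

Lemma E_oth k x : isend k x -> GE x (oth k x).
Proof.
rewrite /isend /oth; case: eqP => [<-|_] /=; first by move=> _; exact: Ek.
by move/eqP=> <-; rewrite E_sym; exact: Ek.
Qed.

Lemma rt_oth k x : isend k x -> rt (oth k x) = rt x.
Proof. by move/E_oth/connect1/rt_eq. Qed.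

Lemma isend_oth k x : isend k x -> isend k (oth k x).
Proof. by rewrite /isend /oth; case: eqP => [->|_]; rewrite eqxx ?orbT. Qed.

Lemma oth_oth k x : isend k x -> oth k (oth k x) = x.
Proof.
rewrite /isend /oth; case: (src k =P x) => [<-|ne] /=.
  by rewrite (negbTE (Hloop k)).
by move/eqP=> <-; rewrite eqxx.
Qed.

Lemma oth_neq k x : isend k x -> oth k x != x.
Proof.
rewrite /isend /oth; case: (src k =P x) => [<-|ne] /=; first by rewrite eq_sym Hloop.
by move/eqP=> <-; rewrite Hloop.
Qed.

Lemma sum_ends (a : T -> int) k x : isend k x ->
  a (src k) + a (tgt k) = a x + a (oth k x).
Proof.
rewrite /isend /oth; case: (src k =P x) => [<-|ne] //= /eqP<-.
by rewrite addrC.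
Qed.

Definition pedge x : option 'I_m :=
  [pick k | isend k x && ((dep (oth k x)).+1 == dep x)].

Lemma pedge_some x k : pedge x = Some k -> isend k x /\ (dep (oth k x)).+1 = dep x.
Proof. by rewrite /pedge; case: pickP => // k' /andP[H /eqP H'] [<-]. Qed.

Lemma pedge_none x : pedge x = None -> dep x = 0%N.
Proof.
rewrite /pedge; case: pickP => // H _.
case Hd: (dep x) => [|n] //; have [y eyx dy] := depS Hd.
case/EP: eyx => k Hk; move: (H k).
have ny : y != x.
  by apply/eqP=> yx; move: dy; rewrite yx Hd => H1; lia.
case/orP: Hk => /andP[/eqP s /eqP t].
  have ie : isend k x by rewrite /isend t eqxx orbT.
  have -> : oth k x = y by rewrite /oth s (negbTE ny).
  by rewrite ie dy Hd eqxx.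
have ie : isend k x by rewrite /isend s eqxx.
have -> : oth k x = y by rewrite /oth s eqxx.
by rewrite ie dy Hd eqxx.
Qed.

Lemma pedge_rt x : (pedge x == None) = (rt x == x).
Proof.
rewrite -dep0; case H: (pedge x) => [k|]; last by rewrite (pedge_none H) eqxx.
by have [_ <-] := pedge_some H.
Qed.

Definition A (a : T -> int) (k : 'I_m) : int := a (src k) + a (tgt k).

Fixpoint solf (b : 'I_m -> int) n x : int :=
  if n is n'.+1 then (if pedge x is Some k then b k - solf b n' (oth k x) else 0)
  else 0.
Definition sol b x := solf b (dep x) x.

Lemma solE b x : sol b x = if pedge x is Some k then b k - sol b (oth k x) else 0.
Proof.
rewrite /sol; case H: (pedge x) => [k|]; last by rewrite (pedge_none H).
by have [_ <-] := pedge_some H; rewrite /= H.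
Qed.

Lemma sol_tree b x k : pedge x = Some k -> b k = sol b x + sol b (oth k x).
Proof. by move=> H; rewrite (solE b x) H subrK. Qed.

Lemma solfD b1 b2 n x : solf (fun k => b1 k + b2 k) n x = solf b1 n x + solf b2 n x.
Proof.
elim: n x => [|n IH] x /=; first by rewrite addr0.
case: (pedge x) => [k|]; last by rewrite addr0.
by rewrite IH opprD addrACA.
Qed.

Lemma solD b1 b2 x : sol (fun k => b1 k + b2 k) x = sol b1 x + sol b2 x.
Proof. exact: solfD. Qed.

Lemma sol0 b : (forall x k, pedge x = Some k -> b k = 0) -> forall x, sol b x = 0.
Proof.
move=> H x; rewrite /sol; move: (dep x) => n; elim: n x => [|n IH] x //=.
by case E1: (pedge x) => [k|] //; rewrite IH (H _ _ E1) subr0.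
Qed.

Definition sg x : int := (-1) ^+ dep x.

Lemma sol_decomp a x : a x = sol (A a) x + sg x * a (rt x).
Proof.
move: {2}(dep x) (erefl (dep x)) => n; elim: n x => [|n IH] x Hx.
  rewrite solE; case H: (pedge x) => [k|].
    by have [_] := pedge_some H; rewrite Hx.
  by move/eqP: Hx; rewrite dep0 /sg => /eqP Hr; rewrite -[dep x]/(dep x) ; move/eqP: (Hr); rewrite -dep0 => /eqP->; rewrite Hr add0r mul1r.
rewrite solE; case H: (pedge x) => [k|]; last by rewrite (pedge_none H) in Hx.
have [ie dk] := pedge_some H.
have IHy := IH (oth k x); rewrite Hx in dk; case: dk => dk; move: (IHy dk).
rewrite /A (sum_ends a ie) (rt_oth ie) /sg Hx -dk exprS => ->.
ring.
Qed.

Definition tree k := [exists x, pedge x == Some k].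

Definition hk k : int := if odd (dep (src k)) == odd (dep (tgt k)) then sg (src k) else 0.

Lemma kappa k : sg (src k) + sg (tgt k) = 2 * hk k.
Proof.
rewrite /hk /sg -!(signr_odd _ (dep _)).
by case: (odd (dep (src k))); case: (odd (dep (tgt k))) => /=; rewrite ?expr0 ?expr1 //; ring.
Qed.

Lemma sg_sq x : sg x * sg x = 1.
Proof. by rewrite /sg -exprD -signr_odd addnn odd_double. Qed.

Lemma sg_neq0 x : sg x != 0.
Proof. by rewrite /sg signr_eq0. Qed.

Lemma hk_sq k : hk k != 0 -> hk k * hk k = 1.
Proof. by rewrite /hk; case: ifP => _ _ //; rewrite sg_sq. Qed.

Lemma hk0 k : (hk k == 0) = (odd (dep (src k)) != odd (dep (tgt k))).
Proof. by rewrite /hk; case: ifP => /= _; rewrite ?eqxx ?(negbTE (sg_neq0 _)). Qed.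

Lemma hk_tree k : tree k -> hk k = 0.
Proof.
case/existsP=> x /eqP H; have [ie dk] := pedge_some H.
have Hp : odd (dep x) != odd (dep (oth k x)) by rewrite -dk /=; case: odd.
apply/eqP; rewrite hk0; move: Hp ie; rewrite /isend /oth.
case: (src k =P x) => [<-|ne] /= Hp; first by [].
by move/eqP=> Ht; rewrite -Ht in Hp; rewrite eq_sym.
Qed.

Definition cls x := [set y in [set: T] | connect GE x y].

Lemma gc_def : graph_components src tgt = cls @: [set: T].
Proof. by []. Qed.

Lemma mem_cls r y : (y \in cls r) = (rt r == rt y).
Proof. by rewrite !inE conn_rt. Qed.

Lemma cls_rt x : cls x = cls (rt x).
Proof. by apply/setP=> y; rewrite !mem_cls rt_rt. Qed.

Definition bipR r := [forall k, (rt (src k) == r) ==> (hk k == 0)].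

Lemma rt_src_isend k y : isend k y -> rt (src k) = rt y.
Proof. by case/orP=> /eqP <- //; rewrite rt_k. Qed.

Lemma bip_iff r : rt r = r -> bipartite src tgt (cls r) = bipR r.
Proof.
move=> Hr; apply/existsP/forallP => [[f Hf] k|H].
  have col : forall y, rt y = r -> f y = f r (+) odd (dep y).
    move=> y; move: {2}(dep y) (erefl (dep y)) => n; elim: n y => [|n IH] y Hy Hry.
      have /eqP e : rt y == y by rewrite -dep0 Hy.
      by rewrite Hy addbF -e Hry.
    case Hp: (pedge y) => [k'|]; last by rewrite (pedge_none Hp) in Hy.
    have [ie dk] := pedge_some Hp; rewrite Hy in dk; case: dk => dk.
    have ry : rt (oth k' y) = r by rewrite rt_oth.
    have IHz := IH _ dk ry.
    have hs : src k' \in cls r by rewrite mem_cls Hr (rt_src_isend ie) Hry.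
    have Hne : f y != f (oth k' y).
      move: (implyP (forallP Hf k') hs); move: ie; rewrite /isend /oth.
      by case: (src k' =P y) => [<-|_] //= /eqP <-; rewrite eq_sym.
    move: Hne; rewrite IHz Hy dk /=.
    by case: (f y); case: (f r); case: (odd n); rewrite //=; move=> /eqP.
  apply/implyP => /eqP rs.
  have hs : src k \in cls r by rewrite mem_cls Hr rs.
  move: (implyP (forallP Hf k) hs); rewrite (col _ rs) (col (tgt k)); last by rewrite rt_k.
  by rewrite hk0; case: (f r); case: (odd _); case: (odd _).
exists [ffun y => odd (dep y)]; apply/forallP => k; apply/implyP => hs.
move: hs; rewrite mem_cls Hr eq_sym => rs.
by move: (implyP (H k) rs); rewrite hk0 !ffunE.
Qed.


Definition Rs := [set x | rt x == x].
Definition BR := [set x in Rs | bipR x].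
Definition NR := [set x in Rs | ~~ bipR x].

Lemma cls_inj : {in Rs &, injective cls}.
Proof.
move=> x y; rewrite !inE => /eqP hx /eqP hy e.
have : y \in cls x by rewrite e mem_cls eqxx.
by rewrite mem_cls hx hy => /eqP.
Qed.

Lemma gc_R : graph_components src tgt = cls @: Rs.
Proof.
rewrite gc_def; apply/setP=> C; apply/imsetP/imsetP => [[x _ ->]|[x _ ->]].
  by exists (rt x); rewrite ?inE ?rt_rt // cls_rt.
by exists x.
Qed.

Lemma cardR : #|Rs| = p0 src tgt.
Proof. by rewrite /p0 gc_R card_in_imset //; exact: cls_inj. Qed.

Lemma cardBR : #|BR| = p0bi src tgt.
Proof.
rewrite /p0bi.
have -> : [set C in graph_components src tgt | bipartite src tgt C] = cls @: BR.
  apply/setP=> C; rewrite inE gc_R; apply/andP/imsetP => [[/imsetP[x xR ->] b]|[x]].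
    exists x => //; rewrite inE xR /= -bip_iff //; by move: xR; rewrite inE => /eqP.
  rewrite inE => /andP[xR bx] ->; split; first by apply/imsetP; exists x.
  by rewrite bip_iff //; move: xR; rewrite inE => /eqP.
rewrite card_in_imset //; move=> x y xB yB; apply: cls_inj.
  by move: xB; rewrite inE => /andP[].
by move: yB; rewrite inE => /andP[].
Qed.

Lemma cardNR : #|NR| = (p0 src tgt - p0bi src tgt)%N.
Proof.
rewrite -cardR -cardBR.
have : #|Rs :&: [set x | bipR x]| + #|Rs :\: [set x | bipR x]| = #|Rs| by exact: cardsID.
have -> : Rs :&: [set x | bipR x] = BR by apply/setP=> x; rewrite !inE.
have -> : Rs :\: [set x | bipR x] = NR by apply/setP=> x; rewrite !inE andbC.
lia.
Qed.

Definition oe r : option 'I_m := [pick k | (rt (src k) == r) && (hk k != 0)].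

Lemma oe_some r k : oe r = Some k -> rt (src k) = r /\ hk k != 0.
Proof. by rewrite /oe; case: pickP => // k' /andP[/eqP H1 H2] [<-]. Qed.

Lemma oe_none r k : oe r = None -> rt (src k) = r -> hk k = 0.
Proof.
rewrite /oe; case: pickP => // H _ Hr; move: (H k); rewrite Hr eqxx /=.
by move/negbFE/eqP.
Qed.

Lemma bipR_oe r : bipR r = (oe r == None).
Proof.
case H: (oe r) => [k|] /=.
  have [H1 H2] := oe_some H; apply/negbTE; apply/negP=> /forallP/(_ k).
  by rewrite H1 eqxx /= (negbTE H2).
by apply/forallP=> k; apply/implyP=> /eqP e; rewrite (oe_none H e).
Qed.

Definition OE := [set k | oe (rt (src k)) == Some k].

Lemma cardOE : #|OE| = #|NR|.
Proof.
have -> : NR = (fun k => rt (src k)) @: OE.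
  apply/setP=> r; rewrite inE; apply/andP/imsetP => [[rR nb]|[k kO ->]].
    move: nb; rewrite bipR_oe; case H: (oe r) => [k|] // _.
    have [H1 _] := oe_some H; exists k => //; by rewrite inE H1 H.
  move: kO; rewrite inE => /eqP H; have [_ H2] := oe_some H.
  split; first by rewrite inE rt_rt.
  by rewrite bipR_oe H.
rewrite card_in_imset //; move=> k k'; rewrite !inE => /eqP H /eqP H' e.
by move: H; rewrite e H' => -[].
Qed.

Definition Trs := [set k | tree k].
Definition ch k := if pedge (src k) == Some k then src k else tgt k.

Lemma tree_ch k : tree k -> pedge (ch k) = Some k.
Proof.
case/existsP=> x /eqP H; rewrite /ch; case: eqP => // H2.
have [ie _] := pedge_some H; move: ie; rewrite /isend; case/orP=> /eqP e.
  by rewrite e H in H2.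
by rewrite e.
Qed.

Lemma cardTr : #|Trs| = (#|T| - #|Rs|)%N.
Proof.
have -> : (#|T| - #|Rs| = #|~: Rs|)%N by have := cardsC Rs; lia.
have -> : ~: Rs = ch @: Trs.
  apply/setP=> x; rewrite !inE; apply/idP/imsetP => [nr|[k kT ->]].
    have : pedge x != None by rewrite pedge_rt.
    case H: (pedge x) => [k|] // _; exists k; first by rewrite inE; apply/existsP; exists x; rewrite H.
    have [ie dk] := pedge_some H.
    have Hc := tree_ch (introT existsP (ex_intro _ x (introT eqP H))).
    rewrite /ch; case: eqP => H2.
      move: ie; rewrite /isend; case/orP => /eqP e //.
      exfalso; have [ie2 dk2] := pedge_some H2; move: dk dk2.
      have -> : oth k x = src k by rewrite /oth -e (negbTE (Hloop k)).
      have -> : oth k (src k) = x by rewrite /oth eqxx.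
      move=> <-; lia.
    by move: ie; rewrite /isend; case/orP => /eqP e //; rewrite e H in H2.
  by rewrite -pedge_rt; move: kT; rewrite inE => /tree_ch ->.
rewrite card_in_imset //; move=> k k'; rewrite !inE => /tree_ch H /tree_ch H' e.
by move: H; rewrite e H' => -[].
Qed.

Lemma OE_tree k : k \in OE -> ~~ tree k.
Proof.
rewrite inE => /eqP H; have [_ H2] := oe_some H.
by apply/negP=> /hk_tree; move/eqP: H2.
Qed.

Definition FE := [set k | ~~ tree k && (k \notin OE)].

Lemma cardFE : #|FE| = (p1 src tgt - (p0 src tgt - p0bi src tgt))%N.
Proof.
rewrite /p1 -cardNR -cardR -cardOE.
have e1 : FE = ~: (Trs :|: OE) by apply/setP=> k; rewrite !inE negb_or.
have e2 : #|Trs :|: OE| = (#|Trs| + #|OE|)%N.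
  rewrite cardsU; have -> : Trs :&: OE = set0.
    by apply/setP=> k; rewrite in_set0; apply/negP=> /setIP[]; rewrite inE => t /OE_tree; rewrite t.
  by rewrite cards0 subn0.
have e3 : #|FE| = (m - #|Trs :|: OE|)%N by rewrite e1; have := cardsC (Trs :|: OE); rewrite card_ord; lia.
have e4 : (#|Trs :|: OE| <= m)%N by have := max_card (Trs :|: OE); rewrite card_ord.
have e5 : (#|Rs| <= #|T|)%N by exact: max_card.
rewrite e3 e2 cardTr; rewrite e2 cardTr in e4; lia.
Qed.


Local Notation n1 := (p1 src tgt - (p0 src tgt - p0bi src tgt))%N.
Local Notation n2 := (p0 src tgt - p0bi src tgt)%N.
Local Notation nb := (p0bi src tgt).

Definition cOE : #|OE| = n2 := etrans cardOE cardNR.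
Definition eF (i : 'I_n1) : 'I_m := enum_val (cast_ord (esym cardFE) i).
Definition eO (j : 'I_n2) : 'I_m := enum_val (cast_ord (esym cOE) j).
Definition eB (i : 'I_nb) : T := enum_val (cast_ord (esym cardBR) i).

Lemma eF_in i : eF i \in FE. Proof. by case: (enum_cast cardFE) => H _ _; apply: H. Qed.
Lemma eF_inj : injective eF. Proof. by case: (enum_cast cardFE) => _ H _; apply: H. Qed.
Lemma eF_surj k : k \in FE -> exists i, eF i = k. Proof. by case: (enum_cast cardFE) => _ _; apply. Qed.
Lemma eO_in i : eO i \in OE. Proof. by case: (enum_cast cOE) => H _ _; apply: H. Qed.
Lemma eO_inj : injective eO. Proof. by case: (enum_cast cOE) => _ H _; apply: H. Qed.
Lemma eO_surj k : k \in OE -> exists i, eO i = k. Proof. by case: (enum_cast cOE) => _ _; apply. Qed.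
Lemma eB_in i : eB i \in BR. Proof. by case: (enum_cast cardBR) => H _ _; apply: H. Qed.
Lemma eB_inj : injective eB. Proof. by case: (enum_cast cardBR) => _ H _; apply: H. Qed.
Lemma eB_surj k : k \in BR -> exists i, eB i = k. Proof. by case: (enum_cast cardBR) => _ _; apply. Qed.

Definition bp (b : 'I_m -> int) k := b k - (sol b (src k) + sol b (tgt k)).
Definition oval b k := if oe (rt (src k)) is Some o then hk k * hk o * bp b o else 0.
Definition Phi (b : 'I_m -> int) : 'rV[int]_n1 * 'rV['Z_2]_n2 :=
  (\row_(i < n1) (bp b (eF i) - oval b (eF i)), \row_(j < n2) ((bp b (eO j))%:~R : 'Z_2)).

Lemma solf_ext b b' n x : (forall k, b k = b' k) -> solf b n x = solf b' n x.
Proof. by move=> H; elim: n x => //= n IH x; case: (pedge x) => // k; rewrite IH H. Qed.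

Lemma Phi_ext b b' : (forall k, b k = b' k) -> Phi b = Phi b'.
Proof.
move=> H; have Hs : forall x, sol b x = sol b' x by move=> x; exact: solf_ext.
have Hb : forall k, bp b k = bp b' k by move=> k; rewrite /bp H !Hs.
have Ho : forall k, oval b k = oval b' k by move=> k; rewrite /oval; case: oe => // o; rewrite Hb.
by rewrite /Phi; congr (_, _); apply/matrixP => i j; rewrite !mxE ?Hb ?Ho.
Qed.

Lemma PhiD b1 b2 : Phi (fun k => b1 k + b2 k) = Phi b1 + Phi b2.
Proof.
have Hb : forall k, bp (fun k => b1 k + b2 k) k = bp b1 k + bp b2 k.
  by move=> k; rewrite /bp !solD; ring.
have Ho : forall k, oval (fun k => b1 k + b2 k) k = oval b1 k + oval b2 k.
  by move=> k; rewrite /oval; case: oe => [o|]; rewrite ?Hb ?addr0 //; ring.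
rewrite /Phi; congr (_, _); apply/matrixP => i j; rewrite !mxE ?Hb ?Ho; first ring.
by rewrite intrD.
Qed.

Lemma rt_tgt k : rt (tgt k) = rt (src k). Proof. exact: rt_k. Qed.

Lemma bp_A a k : bp (A a) k = 2 * hk k * a (rt (src k)).
Proof.
rewrite /bp {1}/A (sol_decomp a (src k)) (sol_decomp a (tgt k)) rt_tgt.
have := kappa k; move: (sg (src k)) (sg (tgt k)) => u v e.
rewrite -e; ring.
Qed.

Lemma tree_bp b k : tree k -> bp b k = 0.
Proof.
case/existsP=> x /eqP H; have [ie _] := pedge_some H.
by rewrite /bp (sum_ends (sol b) ie) (sol_tree b H) subrr.
Qed.

Lemma Phi_ker b : Phi b = 0 <-> exists a, forall k, b k = A a k.
Proof.
split=> [H|[a Ha]]; last first.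
  rewrite (Phi_ext Ha) /Phi; congr (_, _); apply/matrixP => i j; rewrite !mxE.
    rewrite /oval; case Ho: oe => [o|].
      have [e1 e2] := oe_some Ho; rewrite !bp_A e1.
      have hh := hk_sq e2.
      apply/eqP; rewrite subr_eq0; apply/eqP.
      by rewrite -[LHS]mulr1 -hh; ring.
    by rewrite bp_A (oe_none Ho (erefl _)) !mulr0 mul0r subr0.
  by rewrite bp_A -mulrA Z2_even.
have ev : forall o, o \in OE -> bp b o = 2 * (bp b o %/ 2)%Z.
  move=> o /eO_surj[j <-]; apply: even_Z2.
  by move: (congr1 (fun p : 'rV[int]_n1 * 'rV['Z_2]_n2 => p.2 0 j) H); rewrite /Phi /= !mxE.
pose q r := if oe r is Some o then (bp b o %/ 2)%Z * hk o else 0.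
exists (fun x => sol b x + sg x * q (rt x)) => k.
rewrite /A rt_tgt.
suff : bp b k = 2 * hk k * q (rt (src k)).
  by rewrite /bp -(kappa k) => e; rewrite -[b k](subrK (sol b (src k) + sol b (tgt k))) e; ring.
case Ht: (tree k); first by rewrite tree_bp // hk_tree // !mulr0 mul0r.
case HO: (k \in OE).
  move: (HO); rewrite inE => /eqP Ho; rewrite /q Ho [in LHS](ev _ HO).
  have [_ e2] := oe_some Ho; have := hk_sq e2; move: (hk k) => h hh.
  rewrite -[LHS]mul1r -hh; ring.
have kF : k \in FE by rewrite inE Ht HO.
have [i ei] := eF_surj kF.
move: (congr1 (fun p : 'rV[int]_n1 * 'rV['Z_2]_n2 => p.1 0 i) H); rewrite /Phi /= !mxE ei /oval /q.
case Ho: oe => [o|]; last by move/eqP; rewrite subr0 mulr0 => /eqP.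
move/eqP; rewrite subr_eq0 => /eqP ->.
have [e1 _] := oe_some Ho.
have oO : o \in OE by rewrite inE e1 Ho.
rewrite {1}(ev _ oO); ring.
Qed.

Lemma Phi_surj y : exists b, Phi b = y.
Proof.
case: y => y z.
pose bO k : int := \sum_(j < n2) (k == eO j)%:R * (z 0 j : nat)%:Z.
pose bF k : int := \sum_(i < n1) (k == eF i)%:R * y 0 i.
pose corr k : int := if k \in FE then
   (if oe (rt (src k)) is Some o then hk k * hk o * bO o else 0) else 0.
pose b k := bF k + bO k + corr k.
have bF0 : forall k, k \notin FE -> bF k = 0.
  move=> k kF; apply: sum_ind0 => i; apply: contraNneq kF => <-; exact: eF_in.
have bO0 : forall k, k \notin OE -> bO k = 0.
  move=> k kF; apply: sum_ind0 => i; apply: contraNneq kF => <-; exact: eO_in.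
have c0 : forall k, k \notin FE -> corr k = 0 by move=> k kF; rewrite /corr (negbTE kF).
have OF : forall k, k \in OE -> k \notin FE by move=> k kO; rewrite inE kO andbF.
have s0 : forall x, sol b x = 0.
  apply: sol0 => x k H.
  have tk : tree k by apply/existsP; exists x; rewrite H.
  have kF : k \notin FE by rewrite inE tk.
  have kO : k \notin OE by apply/negP => /OE_tree; rewrite tk.
  by rewrite /b bF0 // bO0 // c0 // !addr0.
have bpb : forall k, bp b k = b k by move=> k; rewrite /bp !s0 (addr0 (0:int)) subr0.
exists b; rewrite /Phi; congr (_, _); apply/matrixP => i j; rewrite !mxE (ord1 i) bpb.
  rewrite /oval /b /corr (eF_in j) bO0; last by apply: contraTN (eF_in j); apply: OF.
  rewrite /bF sum_ind; last exact: eF_inj.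
  case Ho: oe => [o|]; last by rewrite !addr0 ?subr0.
  have [e1 _] := oe_some Ho; have oO : o \in OE by rewrite inE e1 Ho.
  by rewrite bpb /b bF0 ?c0 ?OF // add0r addr0 addr0 addrK.
rewrite /b bF0 ?c0 ?OF ?eO_in // add0r addr0 /bO.
rewrite (sum_ind (fun j => (z 0 j : nat)%:Z) eO_inj); exact: natZ2.
Qed.

Definition Kz (a : T -> int) := forall k, A a k = 0.
Definition Psi0 (a : T -> int) : 'rV[int]_nb := \row_(i < nb) a (eB i).

Lemma sg_root x : rt x = x -> sg x = 1.
Proof. by move=> H; rewrite /sg; move/eqP: H; rewrite -dep0 => /eqP->. Qed.

Lemma Psi0_ker a : Kz a -> Psi0 a = 0 -> forall x, a x = 0.
Proof.
move=> K P x; rewrite (sol_decomp a x).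
rewrite (sol0 (b := A a)); last by move=> ? k _; exact: K.
rewrite add0r; case Hb: (bipR (rt x)).
  have : rt x \in BR by rewrite !inE rt_rt eqxx Hb.
  case/eB_surj => i <-; move: (congr1 (fun p : 'rV[int]_nb => p 0 i) P); rewrite !mxE => ->.
  by rewrite mulr0.
move: Hb; rewrite bipR_oe; case Ho: oe => [o|] // _.
have [e1 e2] := oe_some Ho.
have s0 : forall y, sol (A a) y = 0 by apply: sol0 => ? k _; exact: K.
have : bp (A a) o = 0 by rewrite /bp K !s0; ring.
rewrite bp_A e1 => /eqP; rewrite !mulf_eq0 (negbTE e2) orbF.
by case/orP => [//|/eqP ->]; rewrite mulr0.
Qed.

Lemma Psi0_surj y : exists a, Kz a /\ Psi0 a = y.
Proof.
pose S r : int := \sum_(i < nb) (r == eB i)%:R * y 0 i.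
exists (fun x => sg x * S (rt x)); split.
  move=> k; rewrite /A rt_tgt -mulrDl kappa.
  case H: (hk k == 0); first by move/eqP: H => ->; rewrite !mulr0 mul0r.
  rewrite /S sum_ind0 ?mulr0 // => i; apply/eqP => e.
  have := eB_in i; rewrite e !inE => /andP[_ /forallP/(_ k)].
  by rewrite eqxx H.
apply/matrixP => i j; rewrite !mxE (ord1 i).
have : eB j \in Rs by move: (eB_in j); rewrite inE => /andP[].
rewrite inE => /eqP e; rewrite e sg_root // mul1r /S sum_ind //; exact: eB_inj.
Qed.

End Graph.

Lemma sum_le1 (I : finType) (P : pred I) (F : I -> nat) :
  (forall i, P i -> (F i <= 1)%N) -> (\sum_(i | P i) F i)%N = #|P| ->
  forall i, P i -> F i = 1%N.
Proof.
move=> H1 H2.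
have : (\sum_(i | P i) (1 - F i) + \sum_(i | P i) F i = \sum_(i | P i) 1)%N.
  by rewrite -big_split /=; apply: eq_bigr => i Pi; rewrite subnK // H1.
rewrite sum1_card H2 => /eqP; rewrite -{2}[#|P|]add0n eqn_add2r => /eqP/eqP.
rewrite sum_nat_eq0 => /forallP H i Pi; move: (implyP (H i) Pi) (H1 i Pi); lia.
Qed.

Lemma reindex_sup (I J : finType) (h : I -> J) (F : J -> int) :
  injective h -> (forall t, F t != 0 -> exists u, t = h u) ->
  \sum_t F t = \sum_u F (h u).
Proof.
move=> inj H; rewrite (bigID (mem (h @: setT))) /=.
rewrite [X in _ + X]big1 ?addr0; last first.
  move=> t tn; apply/eqP; apply: contraR tn => /H[u ->].
  by apply/imsetP; exists u.
rewrite (big_imset _ (in2W inj)) /=; apply: eq_bigl => u; by rewrite in_setT.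
Qed.

Lemma ffunMzE' (aT : finType) (f : {ffun aT -> int}) (n : int) x : (f *~ n) x = f x * n.
Proof.
case: n => n; first by rewrite -pmulrn ffunMnE -mulr_natr natz.
by rewrite NegzE mulrNz ffunE -pmulrn ffunMnE mulrN -mulr_natr natz.
Qed.

Section Chains.
Variables (T : finType) (m : nat) (src tgt : 'I_m -> T).
Hypothesis Hloop : forall k, src k != tgt k.
Hypothesis Hsimple : injective (fun k => [set src k; tgt k]).

Local Notation comps := (components src tgt).
Local Notation st := (state src tgt 2).
Local Notation chain := {ffun st -> int}.

Lemma adj_sym s x y : adj src tgt s x y = adj src tgt s y x.
Proof.
apply/existsP/existsP => [][k /andP[ks H]]; exists k; by rewrite ks orbC.
Qed.

Lemma conn_eqv s : {in [set: T] & &, equivalence_rel (connect (adj src tgt s))}.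
Proof.
move=> x y z _ _ _; split; first exact: connect0.
move=> cxy; apply/idP/idP => [cxz|cyz].
  apply: connect_trans _ cxz; rewrite (sym_connect_sym (adj_sym s)); exact: cxy.
exact: connect_trans cxy cyz.
Qed.

Lemma pblock_comp s x : pblock (comps s) x = [set y | connect (adj src tgt s) x y].
Proof.
apply/setP=> y; rewrite inE /components pblock_equivalence_partition ?in_setT //.
exact: conn_eqv.
Qed.

Lemma cover_comps s : cover (comps s) = [set: T].
Proof. by have /and3P[/eqP -> _ _] := equivalence_partitionP (conn_eqv s). Qed.

Lemma pblock_in s x : pblock (comps s) x \in comps s.
Proof. by apply: pblock_mem; rewrite cover_comps in_setT. Qed.

Lemma comps_def s : comps s = (fun x => [set y | connect (adj src tgt s) x y]) @: [set: T].
Proof.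
apply/setP=> C; apply/imsetP/imsetP => [][x _ ->]; exists x => //; apply/setP=> y; by rewrite !inE.
Qed.

Lemma conn0 x y : connect (adj src tgt set0) x y = (x == y).
Proof.
apply/idP/eqP => [|->]; last exact: connect0.
case/connectP => [[|z p]] //= /andP[/existsP[k]]; by rewrite in_set0.
Qed.

Lemma comps0 : comps set0 = set1 @: [set: T].
Proof.
rewrite comps_def; apply: eq_imset => x; apply/setP=> y; by rewrite !inE conn0 eq_sym.
Qed.

Lemma pblock0 x : pblock (comps set0) x = [set x].
Proof. by rewrite pblock_comp; apply/setP=> y; rewrite !inE conn0 eq_sym. Qed.

Definition S2 k := [set src k; tgt k].

Lemma adj1 k x y : adj src tgt [set k] x y -> (x \in S2 k) && (y \in S2 k).
Proof.
case/existsP=> j /andP[]; rewrite inE => /eqP -> /orP[] /andP[/eqP<- /eqP<-];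
  by rewrite !inE !eqxx ?orbT.
Qed.

Lemma conn1 k x y : connect (adj src tgt [set k]) x y =
  (x == y) || ((x \in S2 k) && (y \in S2 k)).
Proof.
apply/idP/idP => [c|].
  pose g z := if z \in S2 k then src k else z.
  have e : g x = g y.
    by apply: conn_inv c => u v /adj1 /andP[hu hv]; rewrite /g hu hv.
  move: e; rewrite /g; case: ifP => hx; case: ifP => hy; rewrite ?hx ?hy ?orbT //=.
  - by move=> e; rewrite -e !inE eqxx in hy.
  - by move=> e; rewrite e !inE eqxx in hx.
  - by move=> ->; rewrite eqxx.
case/orP => [/eqP->|/andP[hx hy]]; first exact: connect0.
case: (x =P y) => [->|ne]; first exact: connect0.
apply: connect1; apply/existsP; exists k; rewrite inE eqxx /=.
move: hx hy ne; rewrite !inE => /orP[]/eqP-> /orP[]/eqP-> ne; rewrite ?eqxx ?andbT ?orbT //; by case: ne.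
Qed.

Lemma cls1E k x : [set y | connect (adj src tgt [set k]) x y] =
  if x \in S2 k then S2 k else [set x].
Proof.
apply/setP=> y; rewrite inE conn1; case: ifP => hx.
  rewrite /=; apply/idP/idP => [/orP[/eqP<-|]//|->]; by rewrite orbT.
by rewrite /= orbF inE eq_sym.
Qed.

Lemma comps1P k X : X \in comps [set k] ->
  X = S2 k \/ exists2 x, x \notin S2 k & X = [set x].
Proof.
rewrite comps_def => /imsetP[x _ ->]; rewrite cls1E; case: ifP => hx; first by left.
by right; exists x; rewrite ?hx.
Qed.

Lemma S2_comps k : S2 k \in comps [set k].
Proof.
rewrite comps_def; apply/imsetP; exists (src k) => //; by rewrite cls1E !inE eqxx.
Qed.

Lemma single_comps k x : x \notin S2 k -> [set x] \in comps [set k].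
Proof. by move=> hx; rewrite comps_def; apply/imsetP; exists x; rewrite // cls1E (negbTE hx). Qed.

Lemma card_comps1 k : #|comps [set k]| = (#|T| - 1)%N.
Proof.
pose f x := [set y | connect (adj src tgt [set k]) x y].
have e : comps [set k] = f @: ([set: T] :\ tgt k).
  rewrite comps_def; apply/setP=> C; apply/imsetP/imsetP => [][x hx ->].
    case: (x =P tgt k) => [->|ne].
      exists (src k); first by rewrite !inE Hloop.
      by rewrite /f !cls1E !inE !eqxx ?orbT.
    by exists x => //; rewrite !inE andbT; apply/eqP.
  by exists x.
rewrite e card_in_imset.
  have := cardsD1 (tgt k) [set: T]; rewrite in_setT cardsT; lia.
move=> x y; rewrite !inE => /andP[nx _] /andP[ny _] fe.
have : y \in f x by rewrite fe inE; exact: connect0.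
rewrite inE conn1 => /orP[/eqP //|/andP[]].
by rewrite !inE (negbTE nx) (negbTE ny) !orbF => /eqP-> /eqP->.
Qed.

Lemma card_comps0 : #|comps set0| = #|T|.
Proof. by rewrite comps0 card_imset ?cardsT //; exact: set1_inj. Qed.


Definition cs u : {ffun {set T} -> 'I_2} :=
  [ffun X => if (X \in comps set0) && (X != [set u]) then ord_max else ord0].
Definition ct k : {ffun {set T} -> 'I_2} :=
  [ffun X => if X \in comps [set k] then ord_max else ord0].

Lemma cs_state u : is_state src tgt ((set0, cs u) : pstate T m 2).
Proof. by apply/forallP=> X; apply/implyP=> /negbTE hX; rewrite ffunE /= hX. Qed.
Lemma ct_state k : is_state src tgt (([set k], ct k) : pstate T m 2).
Proof. by apply/forallP=> X; apply/implyP=> /negbTE hX; rewrite ffunE /= hX. Qed.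

Definition sig u : st := exist _ (set0, cs u) (cs_state u).
Definition tau k : st := exist _ ([set k], ct k) (ct_state k).

Lemma set1_comps0 x : [set x] \in comps set0.
Proof. by rewrite comps0; apply/imsetP; exists x. Qed.

Lemma cs1 u x : val (cs u [set x]) = (x != u) :> nat.
Proof. by rewrite ffunE set1_comps0 /= (inj_eq set1_inj); case: (x != u). Qed.

Lemma sum_predC1 (u : T) : (\sum_(x : T) (x != u) = #|T|.-1)%N.
Proof.
rewrite (bigD1 u) //= eqxx add0n -(cardC1 u) -sum1_card.
by apply: eq_bigr => x ->.
Qed.

Lemma sig_deg u : deg_i (sig u) = 0%N /\ (deg_j (sig u))%:Z = #|T|%:Z - 1.
Proof.
split; first by rewrite /deg_i cards0.
rewrite /deg_j /= comps0 big_imset /=; last by move=> x y _ _; exact: set1_inj.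
rewrite (eq_bigr (fun x => (x != u) : nat)); last by move=> x _; rewrite cs1.
rewrite (eq_bigl (fun x => true)); last by move=> x; rewrite in_setT.
rewrite sum_predC1.
have : (0 < #|T|)%N by apply/card_gt0P; exists u.
by case: #|T| => // n _ /=; rewrite -addn1 PoszD addrK.
Qed.

Lemma tau_deg k : deg_i (tau k) = 1%N /\ (deg_j (tau k))%:Z = #|T|%:Z - 1.
Proof.
split; first by rewrite /deg_i cards1.
rewrite /deg_j /= (eq_bigr (fun _ => 1%N)); last by move=> C hC; rewrite ffunE hC.
rewrite sum1_card card_comps1.
have : (0 < #|T|)%N by apply/card_gt0P; exists (src k).
by case: #|T| => // n _ /=; rewrite subn1 /= -addn1 PoszD addrK.
Qed.

Lemma ord2_eq (a b : 'I_2) : val a = val b -> a = b.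
Proof. exact: val_inj. Qed.

Lemma bideg0 t : deg_i t = 0%N -> (deg_j t)%:Z = #|T|%:Z - 1 -> exists u, t = sig u.
Proof.
case: t => [[s c] Hs]; rewrite /deg_i /deg_j /= => /eqP; rewrite cards_eq0 => /eqP es.
subst s; rewrite comps0 big_imset /=; last by move=> x y _ _; exact: set1_inj.
set n := (\sum_(x in _) _)%N => hn.
have hT : (n.+1 = #|T|)%N.
  by move: hn => /(congr1 (fun z => z + 1)); rewrite subrK -PoszD addn1 => -[].
have lt2 : forall x, (val (c [set x]) <= 1)%N by move=> x; have := ltn_ord (c [set x]).
case: (pickP (fun x => nat_of_ord (c [set x]) == 0%N)) => [u /eqP hu|none]; last first.
  have : n = #|T|.
    rewrite /n -sum1_card; apply: eq_big => x; first by rewrite in_setT.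
    by move=> _; move: (none x) (lt2 x); case: (c [set x]) => [[|[|j]] pj].
  lia.
have hrest : forall x, x != u -> val (c [set x]) = 1%N.
  apply: sum_le1 => //; rewrite cardC1 -hT /= /n [RHS](bigD1 u) ?in_setT //= hu add0n.
  by apply: eq_bigl => x; rewrite in_setT.
exists u; apply: val_inj => /=; congr pair; apply/ffunP => X; rewrite ffunE.
case: (boolP (X \in comps set0)) => hX /=.
  move: (hX); rewrite comps0 => /imsetP[x _ ->]; apply: ord2_eq.
  rewrite (inj_eq set1_inj); case: (x =P u) => [->|/eqP ne] /=; first by rewrite hu.
  exact: hrest.
by apply: ord2_eq; move/forallP: Hs => /(_ X); rewrite hX /= => /eqP.
Qed.

Lemma bideg1 t : deg_i t = 1%N -> (deg_j t)%:Z = #|T|%:Z - 1 -> exists k, t = tau k.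
Proof.
case: t => [[s c] Hs]; rewrite /deg_i /deg_j /= => /eqP /cards1P [k es].
subst s => hn.
have hn' : ((\sum_(C in comps [set k]) c C) + 1 = #|T|)%N.
  by move: hn => /(congr1 (fun z => z + 1)); rewrite subrK -PoszD => -[].
have hT : (\sum_(C in comps [set k]) c C)%N = #|comps [set k]|.
  rewrite card_comps1; have : (1 < #|T|)%N.
    by rewrite (cardD1 (src k)) (cardD1 (tgt k)) !inE eq_sym Hloop.
  lia.
have hall := sum_le1 (fun C _ => ltn_ord (c C) : (val (c C) <= 1)%N) hT.
exists k; apply: val_inj => /=; congr pair; apply/ffunP => X; rewrite ffunE.
case: (boolP (X \in comps [set k])) => hX /=; apply: ord2_eq; first exact: hall.
by move/forallP: Hs => /(_ X); rewrite hX /= => /eqP.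
Qed.

Lemma sig_inj : injective sig.
Proof.
move=> u v /(congr1 val) /= [] /(congr1 (fun f : {ffun {set T} -> 'I_2} => nat_of_ord (f [set u]))).
rewrite !cs1 eqxx; case: (u =P v) => // _.
Qed.

Lemma tau_inj : injective tau.
Proof. by move=> k k' /(congr1 val) /= [] /set1_inj. Qed.


Lemma S2_eq k e : src e \in S2 k -> tgt e \in S2 k -> e = k.
Proof.
move=> hs ht; apply: Hsimple => /=.
move: hs ht (Hloop e); rewrite !inE => /orP[]/eqP-> /orP[]/eqP->; rewrite ?eqxx //.
by rewrite setUC.
Qed.

Lemma de_sig u k : d_e (sig u) k =
  if (src k == u) || (tgt k == u) then [ffun w => (w == tau k)%:Z] else 0.
Proof.
rewrite /d_e /de_target /= !pblock0.
have -> : ([set src k] == [set tgt k]) = false by rewrite (inj_eq set1_inj) (negbTE (Hloop k)).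
rewrite !cs1.
case: ifP => hu.
  have -> : ((src k != u) + (tgt k != u))%N = 1%N.
    move: hu (Hloop k); case/orP=> /eqP <-; rewrite eqxx ?(eq_sym (tgt k)) => /negbTE -> //.
  case: insubP => [o _ vo|]; last by [].
  have e : (k |: set0, [ffun X => if X == [set src k] :|: [set tgt k] then o
             else if X \in comps (k |: set0) then cs u X
                  else Ordinal (leq_ltn_trans (leq0n o) (ltn_ord o))]) = val (tau k).
    rewrite /= setU0; congr pair; apply/ffunP => X; rewrite !ffunE.
    case: (X =P [set src k] :|: [set tgt k]) => [->|nX].
      by rewrite S2_comps; apply: ord2_eq; rewrite vo.
    case: (boolP (X \in comps [set k])) => hX; last by apply: ord2_eq.
    case: (comps1P hX) => [eX|[x hx ->]]; first by case: nX.
    rewrite set1_comps0 (inj_eq set1_inj) /=.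
    have -> : (x != u) = true.
      apply/eqP => exu; move: hx; rewrite exu.
      by move: hu; rewrite !inE => /orP[]/eqP->; rewrite eqxx ?orbT.
    by [].
  by rewrite e; apply/ffunP => w; rewrite !ffunE.
have -> : ((src k != u) + (tgt k != u))%N = 2%N.
  by move: hu; case: (src k =P u); case: (tgt k =P u).
by case: insubP => [o _ vo|] //; have := ltn_ord o; rewrite vo.
Qed.

Lemma de_tau k e : e != k -> d_e (tau k) e = 0.
Proof.
move=> ne; rewrite /d_e /de_target /=.
have -> : (pblock (comps [set k]) (src e) == pblock (comps [set k]) (tgt e)) = false.
  apply/negbTE/negP => /eqP H.
  have : tgt e \in pblock (comps [set k]) (src e) by rewrite H pblock_comp inE connect0.
  rewrite pblock_comp inE conn1 => /orP[]; first by rewrite (negbTE (Hloop e)).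
  by case/andP => h1 h2; move: ne; rewrite (S2_eq h1 h2) eqxx.
rewrite !ffunE !pblock_in /=.
by case: insubP => [o _ vo|] //; have := ltn_ord o; rewrite vo.
Qed.

Lemma dbasis_tau k : dbasis (tau k) = 0.
Proof.
rewrite /dbasis big1 // => e; rewrite !inE => ne.
by rewrite de_tau // mul0rz.
Qed.

Lemma dbasis_sig u : dbasis (sig u) =
  \sum_(k : 'I_m) (if (src k == u) || (tgt k == u) then [ffun w => (w == tau k)%:Z] else 0).
Proof.
rewrite /dbasis /=; apply: eq_big => [e|e _]; first by rewrite !inE.
have -> : #|[set f in (set0 : {set 'I_m}) | (f < e)%N]| = 0%N.
  by apply/eqP; rewrite cards_eq0; apply/eqP/setP => f; rewrite !inE.
by rewrite expr0 mulr1z de_sig.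
Qed.

Lemma sum_ends2 (G : T -> int) k :
  \sum_(u : T) (if (src k == u) || (tgt k == u) then G u else 0) = G (src k) + G (tgt k).
Proof.
rewrite (bigD1 (src k)) //= eqxx /= (bigD1 (tgt k)) /=; last by rewrite eq_sym Hloop.
rewrite eqxx orbT big1 ?addr0 // => x /andP[h1 h2].
by rewrite eq_sym (negbTE h1) eq_sym (negbTE h2).
Qed.

Lemma diff_sig (g : chain) : (forall t, g t != 0 -> exists u, t = sig u) ->
  forall w, diff g w = \sum_(k : 'I_m) (w == tau k)%:Z * (g (sig (src k)) + g (sig (tgt k))).
Proof.
move=> H w; rewrite /diff sum_ffunE.
rewrite (reindex_sup (h := sig) (F := fun t => (dbasis t *~ g t) w)); last first.
- move=> t; case: (g t =P 0) => [->|/eqP]; last by move/H.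
  by rewrite mulr0z ffunE eqxx.
- exact: sig_inj.
under eq_bigr => u _ do rewrite ffunMzE' dbasis_sig sum_ffunE mulr_suml.
rewrite exchange_big /=; apply: eq_bigr => k _.
rewrite mulrDr; have := sum_ends2 (fun u => (w == tau k)%:Z * g (sig u)) k; move=> /= <-.
apply: eq_bigr => u _; case: ifP => _; first by rewrite ffunE mulrC.
by rewrite ffunE mul0r.
Qed.

Lemma diff_tau (f : chain) : (forall t, f t != 0 -> exists k, t = tau k) -> diff f = 0.
Proof.
move=> H; rewrite /diff big1 // => t _.
case: (f t =P 0) => [->|/eqP /H [k ->]]; first by rewrite mulr0z.
by rewrite dbasis_tau mul0rz.
Qed.


Lemma sumZ_ind (I : finType) (e : I -> st) (v : I -> int) :
  injective e -> forall i0, \sum_(i : I) (e i0 == e i)%:Z * v i = v i0.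
Proof.
move=> inj i0; rewrite (bigD1 i0) //= eqxx mul1r big1 ?addr0 // => i ne.
by rewrite (inj_eq inj) eq_sym (negbTE ne) mul0r.
Qed.

Lemma sumZ_ind0 (I : finType) (e : I -> st) (v : I -> int) x :
  (forall i, x != e i) -> \sum_(i : I) (x == e i)%:Z * v i = 0.
Proof. by move=> H; rewrite big1 // => i _; rewrite (negbTE (H i)) mul0r. Qed.

Lemma supp_of (I : finType) (e : I -> st) (v : I -> int) (t : st) :
  \sum_(i : I) (t == e i)%:Z * v i != 0 -> exists i, t = e i.
Proof.
case: (pickP (fun i => t == e i)) => [i /eqP ->|none]; first by exists i.
by rewrite sumZ_ind0 ?eqxx // => i; rewrite none.
Qed.

Lemma diff0 : diff (0 : chain) = 0.
Proof. by rewrite /diff big1 // => t _; rewrite ffunE mulr0z. Qed.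

Local Notation jj := (#|T|%:Z - 1).

Lemma diff_sig_tau (g : chain) : (forall t, g t != 0 -> exists u, t = sig u) ->
  forall k, diff g (tau k) = g (sig (src k)) + g (sig (tgt k)).
Proof.
move=> H k; rewrite (diff_sig H) (sumZ_ind (fun k => g (sig (src k)) + g (sig (tgt k))) tau_inj).
by [].
Qed.

Lemma diff_sig_other (g : chain) : (forall t, g t != 0 -> exists u, t = sig u) ->
  forall w, (forall k, w != tau k) -> diff g w = 0.
Proof. by move=> H w nw; rewrite (diff_sig H) sumZ_ind0. Qed.

Lemma part0 : cohom_iso src tgt 2 0 jj 'rV[int]_(p0bi src tgt).
Proof.
exists (fun f : chain => Psi0 src tgt (fun u => f (sig u))).
have supp0 : forall f : chain, in_bideg 0 jj f -> forall t, f t != 0 -> exists u, t = sig u.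
  by move=> f Hf t /Hf [h1 h2]; apply: bideg0.
have cocyc : forall f : chain, in_bideg 0 jj f ->
    (diff f = 0 <-> Kz src tgt (fun u => f (sig u))).
  move=> f Hf; split => [H k | K].
    by have := diff_sig_tau (supp0 f Hf) k; rewrite H ffunE /A => <-.
  apply/ffunP => w; rewrite ffunE.
  case: (pickP (fun k => w == tau k)) => [k /eqP ->|none].
    by rewrite (diff_sig_tau (supp0 f Hf)); have := K k; rewrite /A /=.
  by apply: diff_sig_other (supp0 f Hf) _ _ => k; rewrite none.
split.
- move=> f g _ _; apply/matrixP => i j; by rewrite !mxE !ffunE.
- move=> y; have [a [Ka Pa]] := Psi0_surj y.
  pose f : chain := [ffun t => \sum_(u : T) (t == sig u)%:Z * a u].
  have fs : forall u, f (sig u) = a u by move=> u; rewrite ffunE sumZ_ind //; exact: sig_inj.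
  have fsupp : forall t, f t != 0 -> exists u, t = sig u by move=> t; rewrite ffunE => /supp_of.
  have fb : in_bideg 0 jj f by move=> t /fsupp [u ->]; exact: sig_deg.
  exists f; split; last by rewrite -Pa; apply/matrixP => i j; rewrite !mxE fs.
  split => //; apply/(cocyc f fb) => k; rewrite /A !fs; exact: Ka.
- move=> f [Hf Df]; split => [P|[g [Hg ->]]].
    have Ka : Kz src tgt (fun u => f (sig u)) by apply/cocyc.
    have z := Psi0_ker Ka P.
    have -> : f = 0.
      apply/ffunP => t; rewrite ffunE; apply/eqP; apply/negP => /negP nt.
      by have [u e] := supp0 f Hf t nt; move: nt; rewrite e z eqxx.
    by exists 0; split; [move=> t; rewrite ffunE eqxx | rewrite diff0].
  have -> : g = 0 by apply/ffunP => t; rewrite ffunE; apply/eqP; apply/negP => /negP /Hg [].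
  by rewrite diff0; apply/matrixP => i j; rewrite !mxE !ffunE.
Qed.

Lemma part1 : cohom_iso src tgt 2 1 jj
    ('rV[int]_(p1 src tgt - (p0 src tgt - p0bi src tgt)) *
     'rV['Z_2]_(p0 src tgt - p0bi src tgt))%type.
Proof.
exists (fun f : chain => Phi Hloop (fun k => f (tau k))).
have supp1 : forall f : chain, in_bideg 1 jj f -> forall t, f t != 0 -> exists k, t = tau k.
  by move=> f Hf t /Hf [h1 h2]; apply: bideg1.
split.
- move=> f g _ _; rewrite -PhiD; apply: Phi_ext => k; by rewrite ffunE.
- move=> y; have [b Pb] := Phi_surj Hloop y.
  pose f : chain := [ffun t => \sum_(k : 'I_m) (t == tau k)%:Z * b k].
  have fs : forall k, f (tau k) = b k by move=> k; rewrite ffunE sumZ_ind //; exact: tau_inj.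
  have fsupp : forall t, f t != 0 -> exists k, t = tau k by move=> t; rewrite ffunE => /supp_of.
  have fb : in_bideg 1 jj f by move=> t /fsupp [k ->]; exact: tau_deg.
  exists f; split; first by split => //; exact: diff_tau.
  by rewrite -Pb; apply: Phi_ext.
- move=> f [Hf Df]; split => [P|[g [Hg ->]]].
    have [a Ha] := (Phi_ker Hloop _).1 P.
    pose g : chain := [ffun t => \sum_(u : T) (t == sig u)%:Z * a u].
    have gs : forall u, g (sig u) = a u by move=> u; rewrite ffunE sumZ_ind //; exact: sig_inj.
    have gsupp : forall t, g t != 0 -> exists u, t = sig u by move=> t; rewrite ffunE => /supp_of.
    exists g; split.
      move=> t /gsupp [u ->]; have [-> ->] := sig_deg u; done.
    apply/ffunP => w.
    case: (pickP (fun k => w == tau k)) => [k /eqP ->|none].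
      by rewrite diff_sig_tau // !gs Ha.
    rewrite diff_sig_other //; last by move=> k; rewrite none.
    apply/eqP; apply/negP => /negP nw; have [k e] := supp1 f Hf w nw.
    by move: (none k); rewrite e eqxx.
  have gsupp : forall t, g t != 0 -> exists u, t = sig u.
    by move=> t /Hg [h1 h2]; apply: bideg0 => //; case: h1.
  apply/(Phi_ker Hloop _).2; exists (fun u => g (sig u)) => k.
  by rewrite diff_sig_tau.
Qed.

End Chains.

Theorem theorem3p1 (T : finType) (m : nat) (src tgt : 'I_m -> T)
  (Hloop : forall k, src k != tgt k)
  (Hsimple : injective (fun k => [set src k; tgt k])) :
  cohom_iso src tgt 2 0 (#|T|%:Z - 1) 'rV[int]_(p0bi src tgt) /\
  cohom_iso src tgt 2 1 (#|T|%:Z - 1)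
    ('rV[int]_(p1 src tgt - (p0 src tgt - p0bi src tgt)) *
     'rV['Z_2]_(p0 src tgt - p0bi src tgt))%type.
Proof.
split; [exact: part0 | exact: part1].
Qed.
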